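(* Let $K$ be a Hilbert space, $u,v\in\mathbb{B}(K)$ unitaries, $x\in\mathbb{B}(K)$ and $c\ge1$ such that $$\left\|\begin{bmatrix} u & x\\ -1 & v\end{bmatrix}\right\|\le c\sqrt2,$$ where the $2\times2$ operator matrix is viewed as an operator on $K\oplus^2K$. Then $\|x-uv\|\le 2\sqrt{c^2-1}$.
   Context: $\mathbb{B}(K)$ is the algebra of bounded operators on $K$ with the operator norm; $\mathbb{M}_2(\mathbb{B}(K))$ is identified isometrically with $\mathbb{B}(K\oplus^2K)$, where $\oplus^2$ is the Hilbert space direct sum. *)

(* Defs.v *)
From mathcomp Require Import all_boot all_order all_algebra.
From mathcomp Require Import complex.
From mathcomp Require Import classical_sets reals.
Set Implicit Arguments. Unset Strict Implicit. Unset Printing Implicit Defensive.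
Import Order.TTheory GRing.Theory Num.Theory.
Local Open Scope ring_scope.
Local Open Scope complex_scope.
Local Open Scope classical_set_scope.

Section Hilbert.
Variable R : realType.

Definition inner_product {V : lmodType R[i]} (dot : V -> V -> R[i]) : Prop :=
  [/\ (forall (a : R[i]) (x y z : V), dot (a *: x + y) z = a * dot x z + dot y z),
      (forall x y : V, dot y x = (dot x y)^*),
      (forall x : V, 0 <= dot x x) &
      (forall x : V, dot x x = 0 -> x = 0)].

Definition hnorm {V : Type} (dot : V -> V -> R[i]) (x : V) : R :=
  Num.sqrt (@complex.Re R (dot x x)).

Definition complete_for {V : lmodType R[i]} (dot : V -> V -> R[i]) : Prop :=
  forall f : nat -> V,
    (forall e : R, 0 < e -> exists N : nat, forall m n : nat, (N <= m)%N -> (N <= n)%N ->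
        hnorm dot (f m - f n) < e) ->
    exists l : V, forall e : R, 0 < e -> exists N : nat, forall n : nat, (N <= n)%N ->
        hnorm dot (f n - l) < e.

Definition hilbert_space {V : lmodType R[i]} (dot : V -> V -> R[i]) : Prop :=
  inner_product dot /\ complete_for dot.

Definition bounded_op {V : lmodType R[i]} (dot : V -> V -> R[i]) (T : V -> V) : Prop :=
  (forall (a : R[i]) (x y : V), T (a *: x + y) = a *: T x + T y) /\
  exists M : R, forall x : V, hnorm dot (T x) <= M * hnorm dot x.

Definition is_adjoint {V : Type} (dot : V -> V -> R[i]) (T S : V -> V) : Prop :=
  forall x y : V, dot (T x) y = dot x (S y).

Definition unitary {V : lmodType R[i]} (dot : V -> V -> R[i]) (u : V -> V) : Prop :=
  bounded_op dot u /\
  exists us : V -> V, [/\ is_adjoint dot u us, (forall x, us (u x) = x) & (forall x, u (us x) = x)].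

Definition opnorm {U W : Type} (NU : U -> R) (NW : W -> R) (T : U -> W) : R :=
  sup [set NW (T h) | h in [set h | NU h <= 1]].

(* Hilbert direct sum K (+)^2 K: inner product on K * K *)
Definition dsum_dot {V : Type} (dot : V -> V -> R[i]) (p q : V * V) : R[i] :=
  dot p.1 q.1 + dot p.2 q.2.

(* the 2x2 operator matrix [a b; c d] acting on K (+) K (column vectors) *)
Definition opmx2 {V : lmodType R[i]} (a b c d : V -> V) (p : V * V) : V * V :=
  (a p.1 + b p.2, c p.1 + d p.2).

End Hilbert.

(* Main.v *)
Require Import Defs.
From mathcomp Require Import all_boot all_order all_algebra.
From mathcomp Require Import complex.
From mathcomp Require Import classical_sets reals.
From mathcomp Require Import ring lra.
Import Order.TTheory GRing.Theory Num.Theory.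
Local Open Scope ring_scope.

Set Implicit Arguments.
Section Aux.
Variable R : realType.
Variable K : lmodType R[i].
Variable dot : K -> K -> R[i].
Hypothesis Hip : inner_product dot.

Local Open Scope complex_scope.

Definition Nr (z : K) : R := complex.Re (dot z z).

Lemma dot0l z : dot 0 z = 0.
Proof.
case: Hip => H _ _ _.
have := H 1 0 0 z; rewrite scale1r addr0 mul1r => h.
by apply: (addrI (dot 0 z)); rewrite addr0 -h.
Qed.

Lemma dotDl x y z : dot (x + y) z = dot x z + dot y z.
Proof. case: Hip => H _ _ _; by rewrite -{1}(scale1r x) H mul1r. Qed.

Lemma dotZl a x z : dot (a *: x) z = a * dot x z.
Proof. case: Hip => H _ _ _; by rewrite -(addr0 (a *: x)) H dot0l addr0. Qed.

Lemma dotNl x z : dot (- x) z = - dot x z.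
Proof. by rewrite -scaleN1r dotZl mulN1r. Qed.

Lemma dotDr x y z : dot z (x + y) = dot z x + dot z y.
Proof. case: Hip => _ H _ _; by rewrite H dotDl rmorphD /= -!H. Qed.

Lemma dotNr x z : dot z (- x) = - dot z x.
Proof. case: Hip => _ H _ _; by rewrite H dotNl rmorphN /= -!H. Qed.

Lemma dotRr (t : R) x z : dot z (t%:C *: x) = t%:C * dot z x.
Proof. case: Hip => _ H _ _; rewrite [LHS]H dotZl rmorphM /= -H; congr (_ * _); by rewrite /= oppr0. Qed.

Lemma dotzz z : dot z z = (Nr z)%:C.
Proof.
case: Hip => _ _ H _; have := H z; rewrite lecE => /andP[/eqP h _].
rewrite /Nr; case: (dot z z) h => a b /= ->; by [].
Qed.

Lemma Nr_ge0 z : 0 <= Nr z.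
Proof. case: Hip => _ _ H _; have := H z; rewrite lecE => /andP[_ h]; exact: h. Qed.

Lemma Nr_eq0 z : Nr z = 0 -> z = 0.
Proof. case: Hip => _ _ _ H => h; apply: H; by rewrite dotzz h. Qed.

Lemma Nr0 : Nr 0 = 0.
Proof. by rewrite /Nr dot0l. Qed.

Lemma NrC z (t : R) : (Nr z)%:C = (t)%:C -> Nr z = t.
Proof. exact: complexI. Qed.

Lemma NrR (t : R) z : Nr (t%:C *: z) = t ^+ 2 * Nr z.
Proof.
apply: complexI; rewrite -dotzz dotZl dotRr dotzz -!rmorphM /=; congr (_%:C); ring.
Qed.

Lemma Nr_par a b : Nr (a + b) + Nr (a - b) = 2 * Nr a + 2 * Nr b.
Proof.
apply: complexI; rewrite !rmorphD !rmorphM /= -!dotzz.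
rewrite !dotDl !dotDr !dotNl !dotNr /=.
have -> : (2%:C : R[i]) = 2 by rewrite rmorphD /= rmorph1.
ring.
Qed.

Lemma NrD_le a b : Nr (a + b) <= 2 * Nr a + 2 * Nr b.
Proof. rewrite -Nr_par; have := Nr_ge0 (a - b); lra. Qed.

Lemma Nr_dbl a : Nr (a + a) = 4 * Nr a.
Proof.
apply: complexI; rewrite !rmorphM /= -!dotzz !dotDl !dotDr.
have -> : (4%:C : R[i]) = 4 by rewrite /= !rmorphD /= rmorph1.
ring.
Qed.

Lemma hnormE z : hnorm dot z = Num.sqrt (Nr z).
Proof. by []. Qed.

Lemma hnorm2E (p : K * K) : hnorm (dsum_dot dot) p = Num.sqrt (Nr p.1 + Nr p.2).
Proof. by rewrite /hnorm /dsum_dot !dotzz -rmorphD. Qed.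

Section Op.
Variable T : K -> K.
Hypothesis HT : forall (a : R[i]) (x y : K), T (a *: x + y) = a *: T x + T y.

Lemma T0 : T 0 = 0.
Proof.
have := HT 1 0 0; rewrite !scale1r addr0 => h.
by apply: (addrI (T 0)); rewrite addr0 -h.
Qed.
Lemma TZ a x : T (a *: x) = a *: T x.
Proof. by rewrite -(addr0 (a *: x)) HT T0 addr0. Qed.
Lemma TD x y : T (x + y) = T x + T y.
Proof. by rewrite -{1}(scale1r x) HT scale1r. Qed.
Lemma TN x : T (- x) = - T x.
Proof. by rewrite -scaleN1r TZ scaleN1r. Qed.
End Op.

Lemma unitary_Nr u : unitary dot u -> forall z, Nr (u z) = Nr z.
Proof.
move=> [_ [us [Ha H1 _]]] z; by rewrite /Nr Ha H1.
Qed.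

End Aux.
Unset Implicit Arguments.
Arguments Nr {R K} dot z.
Arguments T0 {R K T} HT.
Arguments TZ {R K T} HT a x.
Arguments TN {R K T} HT x.
Arguments TD {R K T} HT x y.

Lemma sq_le (R : realType) (a b : R) : 0 <= a -> a <= b -> a ^+ 2 <= b ^+ 2.
Proof. move=> ha hab; have hb : 0 <= b by lra. rewrite !expr2; nra. Qed.

Lemma sq_le_inv (R : realType) (a b : R) : 0 <= a -> 0 <= b -> a ^+ 2 <= b ^+ 2 -> a <= b.
Proof.
move=> ha hb h; rewrite leNgt; apply/negP => hlt; move: h; rewrite !expr2 => h.
have : b * b < a * a by nra.
lra.
Qed.

Theorem lemma2p2 (R : realType) (K : lmodType R[i]) (dot : K -> K -> R[i])
  (HK : hilbert_space dot) (u v x : K -> K) (c : R)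
  (hu : unitary dot u) (hv : unitary dot v) (hx : bounded_op dot x)
  (hc : 1 <= c)
  (hM : opnorm (hnorm (dsum_dot dot)) (hnorm (dsum_dot dot))
          (opmx2 u x (fun h => - h) v) <= c * Num.sqrt 2) :
  opnorm (hnorm dot) (hnorm dot) (fun h => x h - u (v h))
    <= 2 * Num.sqrt (c ^+ 2 - 1).
Proof.
have Hip := HK.1.
have Lu := hu.1.1. have Lv := hv.1.1. have Lx := hx.1.
have Iu := unitary_Nr hu. have Iv := unitary_Nr hv.
case: hx.2 => Mx HMx.
have Ng := Nr_ge0 Hip.
move: hM; rewrite /opnorm; set S := (X in sup X <= _) => hM.
have hS : has_sup S.
  split.
    exists (hnorm (dsum_dot dot) (opmx2 u x (fun h => - h) v (0, 0))), (0, 0) => //.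
    by rewrite /= (hnorm2E Hip) /= (Nr0 Hip) addr0 sqrtr0 ler01.
  exists (Num.sqrt (6 + 2 * Mx ^+ 2)) => _ [[p1 p2] /= hp <-].
  rewrite !(hnorm2E Hip) /= in hp *.
  apply: ler_wsqrtr.
  have h1 : Nr dot p1 + Nr dot p2 <= 1.
    have := sqr_sqrtr (addr_ge0 (Ng p1) (Ng p2)); have := sqrtr_ge0 (Nr dot p1 + Nr dot p2); nra.
  have hx2 : Nr dot (x p2) <= Mx ^+ 2 * Nr dot p2.
    have := HMx p2; rewrite !hnormE => hb.
    have e1 := sqr_sqrtr (Ng (x p2)); have e2 := sqr_sqrtr (Ng p2).
    have g1 := sqrtr_ge0 (Nr dot (x p2)); have g2 := sqrtr_ge0 (Nr dot p2).
    rewrite -e1 -e2; nra.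
  have a1 := NrD_le Hip (u p1) (x p2).
  have a2 := NrD_le Hip (- p1) (v p2).
  rewrite Iu in a1; rewrite Iv in a2.
  have e : Nr dot (- p1) = Nr dot p1 by rewrite /Nr (dotNl Hip) (dotNr Hip) opprK.
  rewrite e in a2.
  have := Ng p1; have := Ng p2; have : 0 <= Mx ^+ 2 by rewrite sqr_ge0.
  nra.
have hSb : forall p, hnorm (dsum_dot dot) p <= 1 ->
    hnorm (dsum_dot dot) (opmx2 u x (fun h => - h) v p) <= c * Num.sqrt 2.
  move=> p hp; apply: le_trans hM; apply: (sup_upper_bound hS); by exists p.
apply: ge_sup.
  by exists (hnorm dot (x 0 - u (v 0))), 0 => //=; rewrite hnormE (Nr0 Hip) sqrtr0.
move=> _ [b /= hb <-].
rewrite hnormE in hb *.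
have hs0 := Ng b.
have hs1 : Nr dot b <= 1.
  have := sqr_sqrtr hs0; have := sqrtr_ge0 (Nr dot b); nra.
have hc2 : 0 <= c ^+ 2 - 1 by nra.
have hR := sqrtr_ge0 (c ^+ 2 - 1).
have hR2 := sqr_sqrtr hc2.
have [s0|spos] : Nr dot b = 0 \/ 0 < Nr dot b.
  by move: hs0; rewrite le_eqVlt => /orP[/eqP<-|]; auto.
  have -> : b = 0 by apply: (Nr_eq0 Hip).
  rewrite (T0 Lv) (T0 Lu) (T0 Lx) subr0 hnormE (Nr0 Hip) sqrtr0.
  by apply: mulr_ge0.
set s := Nr dot b in hs0 hs1 spos *.
set t := (Num.sqrt (2 * s))^-1.
have ht2 : t ^+ 2 * (2 * s) = 1.
  rewrite /t exprVn sqr_sqrtr; last by nra.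
  by rewrite mulVf //; apply/eqP; nra.
have eN : forall z, Nr dot (- z) = Nr dot z.
  by move=> z; rewrite /Nr (dotNl Hip) (dotNr Hip) opprK.
have := hSb ((t%:C)%C *: - v b, (t%:C)%C *: b).
have -> : hnorm (dsum_dot dot) ((t%:C)%C *: - v b, (t%:C)%C *: b) = 1.
  rewrite (hnorm2E Hip) /= !(NrR Hip) eN Iv -/s.
  have -> : t ^+ 2 * s + t ^+ 2 * s = 1 by rewrite -ht2; ring.
  exact: sqrtr1.
move=> /(_ (lexx _)).
rewrite (hnorm2E Hip) /= (TZ Lu) (TZ Lx) (TZ Lv) (TN Lu) !scalerN opprK.
rewrite -scalerN -scalerDr -scalerDr (addrC (- u (v b))) !(NrR Hip) (Nr_dbl Hip) Iv -/s.
set Ny := Nr dot (x b - u (v b)).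
have hNy := Ng (x b - u (v b)); rewrite -/Ny in hNy.
move=> hq.
have hq0 : 0 <= t ^+ 2 * Ny + t ^+ 2 * (4 * s).
  have : 0 <= t ^+ 2 by apply: sqr_ge0.
  nra.
have hq2 := sqr_sqrtr hq0.
have hsq := sqrtr_ge0 (t ^+ 2 * Ny + t ^+ 2 * (4 * s)).
have h2 := sqr_sqrtr (ler0n R 2).
have h2' := sqrtr_ge0 (2 : R).
have hq3 : t ^+ 2 * Ny + t ^+ 2 * (4 * s) <= c ^+ 2 * 2.
  rewrite -hq2 -h2 -exprMn.
  apply: sq_le => //; exact: hq.
have hq4 : Ny + 4 * s <= 4 * s * c ^+ 2.
  have e : (t ^+ 2 * Ny + t ^+ 2 * (4 * s)) * (2 * s) = (Ny + 4 * s) * (t ^+ 2 * (2 * s)) by ring.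
  rewrite ht2 mulr1 in e.
  rewrite -e.
  have : 0 <= 2 * s by lra.
  nra.
have hNy4 : Ny <= 4 * (c ^+ 2 - 1) by nra.
have e1 := sqr_sqrtr hNy.
have e2 := sqrtr_ge0 Ny.
apply: sq_le_inv => //; first by apply: mulr_ge0 => //; lra.
rewrite e1 exprMn hR2; lra.
Qed.
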